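(* Let $M$ be a Malcev algebra over a field of characteristic different from $2$ and $3$, and let $X$ be a generating set of $M$ (as an algebra). If $\mathrm{J}(x,y,z)=0$ for all $x,y,z\in X$, then $\mathrm{J}(u,v,w)=0$ for all $u,v,w\in M$, i.e. $M$ is a Lie algebra.
   Context: A Malcev algebra is an anticommutative algebra (with product written $xy$) satisfying the Malcev identity $(xy)(xz)=((xy)z)x+((yz)x)x+((zx)x)y$. For elements $a,b,c$ of an algebra, the Jacobian is $\mathrm{J}(a,b,c)=(ab)c+(bc)a+(ca)b$. A Lie algebra is an anticommutative algebra in which $\mathrm{J}$ vanishes identically. *)

(* Defs.v *)
From HB Require Import structures.
From mathcomp Require Import all_boot all_order all_algebra.
Set Implicit Arguments. Unset Strict Implicit. Unset Printing Implicit Defensive.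
Import GRing.Theory.
Local Open Scope ring_scope.

Definition bilinear_product (F : fieldType) (M : lmodType F) (mul : M -> M -> M) : Prop :=
  (forall (a : F) (x y z : M), mul (a *: x + y) z = a *: mul x z + mul y z) /\
  (forall (a : F) (x y z : M), mul x (a *: y + z) = a *: mul x y + mul x z).

Definition anticommutative (F : fieldType) (M : lmodType F) (mul : M -> M -> M) : Prop :=
  forall x : M, mul x x = 0.

Definition malcev_identity (F : fieldType) (M : lmodType F) (mul : M -> M -> M) : Prop :=
  forall x y z : M,
    mul (mul x y) (mul x z) =
      mul (mul (mul x y) z) x + mul (mul (mul y z) x) x + mul (mul (mul z x) x) y.

Definition is_malcev_algebra (F : fieldType) (M : lmodType F) (mul : M -> M -> M) : Prop :=
  [/\ bilinear_product mul, anticommutative mul & malcev_identity mul].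

Definition jacobian (F : fieldType) (M : lmodType F) (mul : M -> M -> M) (a b c : M) : M :=
  mul (mul a b) c + mul (mul b c) a + mul (mul c a) b.

Definition subalgebra_closed (F : fieldType) (M : lmodType F) (mul : M -> M -> M)
  (S : M -> Prop) : Prop :=
  [/\ S 0,
      (forall (a : F) x y, S x -> S y -> S (a *: x + y)) &
      (forall x y, S x -> S y -> S (mul x y))].

Definition generates (F : fieldType) (M : lmodType F) (mul : M -> M -> M)
  (X : M -> Prop) : Prop :=
  forall S : M -> Prop, subalgebra_closed mul S -> (forall x, X x -> S x) -> forall m, S m.

(* Main.v *)
Require Import Defs.
From HB Require Import structures.
From mathcomp Require Import all_boot all_order all_algebra.
Set Implicit Arguments. Unset Strict Implicit. Unset Printing Implicit Defensive.
Import GRing.Theory.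
Local Open Scope ring_scope.

Section RF.
Variable (F : fieldType) (M : lmodType F) (mul : M -> M -> M).
Hypothesis mulDl : forall x y z, mul (x + y) z = mul x z + mul y z.
Hypothesis mulDr : forall x y z, mul x (y + z) = mul x y + mul x z.
Hypothesis mulNl : forall x z, mul (- x) z = - mul x z.
Hypothesis mulNr : forall x z, mul x (- z) = - mul x z.
Hypothesis mul0l : forall z, mul 0 z = 0.
Hypothesis mul0r : forall z, mul z 0 = 0.
Hypothesis mulxx : forall x, mul x x = 0.
Hypothesis anti : forall x y, mul x y = - mul y x.

Inductive tm := V of nat | P of tm & tm | A of tm & tm | N of tm.
Inductive st := SV of nat | SP of st & st.

Fixpoint ev (e : seq M) (t : tm) : M :=
  match t with
  | V n => nth 0 e n
  | P a b => mul (ev e a) (ev e b)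
  | A a b => ev e a + ev e b
  | N a => - ev e a
  end.

Fixpoint evs (e : seq M) (t : st) : M :=
  match t with
  | SV n => nth 0 e n
  | SP a b => mul (evs e a) (evs e b)
  end.

Definition sgn (b : bool) (x : M) := if b then - x else x.

Definition evl e (l : seq (bool * st)) : M :=
  foldr (fun p acc => sgn p.1 (evs e p.2) + acc) 0 l.

Definition prodl (l1 l2 : seq (bool * st)) :=
  flatten (map (fun p1 => map (fun p2 => (xorb p1.1 p2.1, SP p1.2 p2.2)) l2) l1).

Fixpoint expd (t : tm) : seq (bool * st) :=
  match t with
  | V n => [:: (false, SV n)]
  | P a b => prodl (expd a) (expd b)
  | A a b => expd a ++ expd b
  | N a => map (fun p => (~~ p.1, p.2)) (expd a)
  end.

Variable e : seq M.

Lemma evl_cat l1 l2 : evl e (l1 ++ l2) = evl e l1 + evl e l2.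
Proof. by elim: l1 => [|p r IH] /=; rewrite ?add0r // IH addrA. Qed.

Lemma sgnN b x : sgn (~~ b) x = - sgn b x.
Proof. by case: b => //=; rewrite opprK. Qed.

Lemma evl_neg l : evl e (map (fun p => (~~ p.1, p.2)) l) = - evl e l.
Proof. by elim: l => [|p r IH] /=; rewrite ?oppr0 // IH sgnN opprD. Qed.

Lemma sgnM s t x y : mul (sgn s x) (sgn t y) = sgn (xorb s t) (mul x y).
Proof. by case: s; case: t => /=; rewrite ?mulNl ?mulNr ?opprK. Qed.

Lemma evl_prodl l1 l2 : evl e (prodl l1 l2) = mul (evl e l1) (evl e l2).
Proof.
elim: l1 => [|p r IH] /=; first by rewrite mul0l.
rewrite evl_cat IH mulDl; congr (_ + _); clear IH.
elim: l2 => [|q l2 IH2] /=; first by rewrite mul0r.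
by rewrite IH2 mulDr sgnM.
Qed.

Lemma expd_ok t : ev e t = evl e (expd t).
Proof.
elim: t => [n|a IHa b IHb|a IHa b IHb|a IHa] /=.
- by rewrite addr0.
- by rewrite evl_prodl IHa IHb.
- by rewrite evl_cat IHa IHb.
- by rewrite evl_neg IHa.
Qed.

Fixpoint eqst (a b : st) : bool :=
  match a, b with
  | SV n, SV m => n == m
  | SP a1 a2, SP b1 b2 => eqst a1 b1 && eqst a2 b2
  | _, _ => false
  end.

Lemma eqstP a b : eqst a b -> a = b.
Proof.
elim: a b => [n|a1 IH1 a2 IH2] [m|b1 b2] //=; first by move/eqP->.
by case/andP => /IH1 -> /IH2 ->.
Qed.

Fixpoint ltst (a b : st) : bool :=
  match a, b with
  | SV n, SV m => (n < m)%N
  | SV _, SP _ _ => true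
  | SP _ _, SV _ => false
  | SP a1 a2, SP b1 b2 => ltst a1 b1 || (eqst a1 b1 && ltst a2 b2)
  end.

Fixpoint canon (s : st) : option (bool * st) :=
  match s with
  | SV n => Some (false, SV n)
  | SP a b =>
    match canon a, canon b with
    | Some (s1, a'), Some (s2, b') =>
      if eqst a' b' then None
      else if ltst a' b' then Some (xorb s1 s2, SP a' b')
      else Some (~~ xorb s1 s2, SP b' a')
    | _, _ => None
    end
  end.

Definition canon_spec (s : st) (o : option (bool * st)) : Prop :=
  match o with
  | Some (b, s') => evs e s = sgn b (evs e s')
  | None => evs e s = 0
  end.

Lemma canon_ok s : canon_spec s (canon s).
Proof.
elim: s => [n|a IHa b IHb] //=.
move: IHa IHb; rewrite /canon_spec.
case: (canon a) => [[s1 a']|] IHa; case: (canon b) => [[s2 b']|] IHb /=;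
  rewrite ?IHa ?IHb ?mul0l ?mul0r //.
case: ifP => [/eqstP ->|_]; first by rewrite sgnM mulxx; case: (xorb s1 s2) => /=; rewrite ?oppr0.
case: ifP => _ /=; rewrite sgnM //.
by rewrite sgnN (anti (evs e a')); case: (xorb s1 s2) => /=; rewrite ?opprK.
Qed.

Definition canonl (l : seq (bool * st)) :=
  foldr (fun p acc => match canon p.2 with
                      | Some (b, s) => (xorb p.1 b, s) :: acc
                      | None => acc end) [::] l.

Lemma sgn_xor a b x : sgn (xorb a b) x = sgn a (sgn b x).
Proof. by case: a; case: b => //=; rewrite opprK. Qed.

Lemma evl_canonl l : evl e (canonl l) = evl e l.
Proof.
elim: l => [|[b s] r IH] //=.
have := canon_ok s; rewrite /canon_spec.
case: (canon s) => [[b' s']|] /= ->; rewrite IH ?sgn_xor //.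
by case: b => /=; rewrite ?oppr0 add0r.
Qed.

Fixpoint remove_opp (p : bool * st) (l : seq (bool * st)) : option (seq (bool * st)) :=
  match l with
  | [::] => None
  | q :: r => if (q.1 == ~~ p.1) && eqst p.2 q.2 then Some r
              else omap (cons q) (remove_opp p r)
  end.

Lemma remove_opp_ok p l r : remove_opp p l = Some r ->
  evl e l = sgn (~~ p.1) (evs e p.2) + evl e r.
Proof.
elim: l r => [|q l IH] r //=.
case: ifP => [/andP [/eqP h1 /eqstP h2] [<-]|_].
  by rewrite -h1 h2.
case E: (remove_opp p l) => [r'|] //= [<-] /=.
by rewrite (IH _ E) /= addrCA.
Qed.

Fixpoint canc (n : nat) (l : seq (bool * st)) : bool :=
  match n with
  | 0 => nilp l
  | n.+1 => match l with
            | [::] => true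
            | p :: r => match remove_opp p r with
                        | Some r' => canc n r'
                        | None => false end
            end
  end.

Lemma canc_ok n l : canc n l -> evl e l = 0.
Proof.
elim: n l => [|n IH] [|p r] //=.
case E: (remove_opp p r) => [r'|] // /IH h.
rewrite (remove_opp_ok E) h addr0 sgnN.
by rewrite addrN.
Qed.

Definition check (t : tm) := let l := canonl (expd t) in canc (size l) l.

Lemma refl0 t : check t -> ev e t = 0.
Proof. by move=> /canc_ok; rewrite evl_canonl -expd_ok. Qed.

End RF.

Definition Malt (a b c : tm) : tm :=
  A (P (P a b) (P a c))
    (N (A (A (P (P (P a b) c) a) (P (P (P b c) a) a)) (P (P (P c a) a) b))).
Definition Lt (x t y z : tm) : tm :=
  A (A (P (P x y) (P t z)) (P (P t y) (P x z)))
    (N (A (A (A (A (A (P (P (P x y) z) t) (P (P (P t y) z) x))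
       (P (P (P y z) x) t)) (P (P (P y z) t) x)) (P (P (P z x) t) y)) (P (P (P z t) x) y))).
Definition Jt (a b c : tm) : tm := A (A (P (P a b) c) (P (P b c) a)) (P (P c a) b).
Definition Kt (p q v w : tm) : tm :=
  let j := Jt (P p q) v w in
  let k1 := P v (Jt w p q) in
  let k2 := P (Jt v p q) w in
  A (A (A (A (A (A j j) j) (P p (Jt q v w))) (P (Jt p v w) q)) (N (A k1 k1))) (N (A k2 k2)).
Arguments Malt : simpl never.
Arguments Lt : simpl never.
Definition Z0 : tm := A (V 0) (N (V 0)).
Fixpoint sumL (l : seq (nat * nat * nat * nat)) : tm :=
  match l with
  | [::] => Z0
  | (a, b, c, d) :: r => A (Lt (V a) (V b) (V c) (V d)) (sumL r)
  end.
Definition idxK : seq (nat * nat * nat * nat) := [:: (0,1,2,3); (0,1,3,2); (0,1,3,2); (0,1,3,2); (0,1,3,2); (0,2,1,3); (0,2,1,3); (0,2,3,1); (0,2,3,1); (0,2,3,1); (0,2,3,1); (0,2,3,1); (0,3,1,2); (0,3,1,2); (0,3,1,2)].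
Definition Lsum : tm := sumL idxK.
Definition BigK : tm := A (A (Kt (V 0) (V 1) (V 2) (V 3)) (Kt (V 0) (V 1) (V 2) (V 3))) (N Lsum).
Definition BigL : tm := A (Lt (V 0) (V 1) (V 2) (V 3)) (A (N (Malt (A (V 0) (V 1)) (V 2) (V 3))) (A (Malt (V 0) (V 2) (V 3)) (Malt (V 1) (V 2) (V 3)))).
Lemma checkK : check BigK. Proof. by vm_compute. Qed.
Lemma checkL : check BigL. Proof. by vm_compute. Qed.

From mathcomp Require Import zify.

Section Main.
Variable (F : fieldType) (M : lmodType F) (mul : M -> M -> M).
Hypothesis Hbil : bilinear_product mul.
Hypothesis Hac : anticommutative mul.
Hypothesis Hmal : malcev_identity mul.

Lemma mZDl a x y z : mul (a *: x + y) z = a *: mul x z + mul y z.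
Proof. exact: Hbil.1. Qed.
Lemma mZDr a x y z : mul x (a *: y + z) = a *: mul x y + mul x z.
Proof. exact: Hbil.2. Qed.
Lemma m0l z : mul 0 z = 0.
Proof. by have := mZDl (-1) 0 0 z; rewrite scaler0 addr0 scaleN1r addNr. Qed.
Lemma m0r z : mul z 0 = 0.
Proof. by have := mZDr (-1) z 0 0; rewrite scaler0 addr0 scaleN1r addNr. Qed.
Lemma mDl x y z : mul (x + y) z = mul x z + mul y z.
Proof. by have := mZDl 1 x y z; rewrite !scale1r. Qed.
Lemma mDr x y z : mul x (y + z) = mul x y + mul x z.
Proof. by have := mZDr 1 x y z; rewrite !scale1r. Qed.
Lemma mNl x z : mul (- x) z = - mul x z.
Proof. by have := mZDl (-1) x 0 z; rewrite addr0 !scaleN1r m0l addr0. Qed.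
Lemma mNr x z : mul x (- z) = - mul x z.
Proof. by have := mZDr (-1) x z 0; rewrite addr0 !scaleN1r m0r addr0. Qed.
Lemma manti x y : mul x y = - mul y x.
Proof.
have h := Hac (x + y); rewrite mDl !mDr !Hac add0r addr0 in h.
by apply/eqP; rewrite -addr_eq0 h.
Qed.

Let R0 := refl0 mDl mDr mNl mNr m0l m0r Hac manti.

Lemma evMalt e a b c : ev mul e (Malt a b c) = 0.
Proof.
rewrite /Malt /=; rewrite Hmal.
by rewrite subrr.
Qed.

Lemma evLt e a b c d : ev mul e (Lt a b c d) = 0.
Proof.
pose e' := [:: ev mul e a; ev mul e b; ev mul e c; ev mul e d].
have -> : ev mul e (Lt a b c d) = ev mul e' (Lt (V 0) (V 1) (V 2) (V 3)) by [].
have h : ev mul e' (Lt (V 0) (V 1) (V 2) (V 3)) + (- ev mul e' (Malt (A (V 0) (V 1)) (V 2) (V 3))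
   + (ev mul e' (Malt (V 0) (V 2) (V 3)) + ev mul e' (Malt (V 1) (V 2) (V 3)))) = 0 := R0 e' checkL.
rewrite !evMalt oppr0 !addr0 in h.
exact: h.
Qed.

Lemma ev_sumL e l : ev mul e (sumL l) = 0.
Proof.
elim: l => [|[[[a b] c] d] r IH]; first by rewrite /= subrr.
rewrite (_ : ev mul e (sumL _) = ev mul e (Lt (V a) (V b) (V c) (V d)) + ev mul e (sumL r)) //.
by rewrite evLt IH addr0.
Qed.

Definition jac := jacobian mul.

Definition KE p q v w :=
  let j := jac (mul p q) v w in
  let k1 := mul v (jac w p q) in
  let k2 := mul (jac v p q) w in
  j + j + j + mul p (jac q v w) + mul (jac p v w) q - (k1 + k1) - (k2 + k2).

Lemma KE0 p q v w : KE p q v w + KE p q v w = 0.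
Proof.
have h : KE p q v w + KE p q v w + - ev mul [:: p; q; v; w] Lsum = 0 := R0 [:: p; q; v; w] checkK.
rewrite ev_sumL oppr0 addr0 in h.
exact: h.
Qed.

Lemma jac_cyc a b c : jac a b c = jac b c a.
Proof. by rewrite /jac /jacobian -addrA addrC. Qed.

Lemma six_ne0 : (2 \notin [pchar F])%N -> (3 \notin [pchar F])%N -> (6%:R : F) != 0.
Proof.
move=> h2 h3.
have n2 : (2%:R : F) != 0.
  by apply: contra h2 => h; rewrite inE /= h.
have n3 : (3%:R : F) != 0.
  by apply: contra h3 => h; rewrite inE /= h.
by rewrite (_ : 6 = 2 * 3)%N // natrM mulf_neq0.
Qed.

Lemma six_cancel (x : M) : (6%:R : F) != 0 -> (x + x + x) + (x + x + x) = 0 -> x = 0.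
Proof.
move=> h6 h.
have h' : (6%:R : F) *: x = 0.
  by rewrite scaler_nat -h !mulrS mulr0n addr0 !addrA.
by rewrite -[x]scale1r -(mulVf h6) -scalerA h' scaler0.
Qed.

Variable X : M -> Prop.
Hypothesis HX : forall x y z, X x -> X y -> X z -> jac x y z = 0.
Hypothesis H6 : (6%:R : F) != 0.

Inductive mon : nat -> M -> Prop :=
| mon_gen x : X x -> mon 1 x
| mon_mul a b u v : mon a u -> mon b v -> mon (a + b) (mul u v).

Lemma mon_pos n u : mon n u -> (0 < n)%N.
Proof. by elim=> // a b u' v' _ h1 _ h2; rewrite addn_gt0 h1. Qed.

Lemma mon_jac n : forall a b c u v w, mon a u -> mon b v -> mon c w ->
  (a + b + c <= n)%N -> jac u v w = 0.
Proof.
elim: n => [|n IH] a b c u v w mu mv mw le.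
  by have := mon_pos mu; lia.
have step : forall a1 a2 p q b c v w, mon a1 p -> mon a2 q -> mon b v -> mon c w ->
    (a1 + a2 + b + c <= n.+1)%N -> jac (mul p q) v w = 0.
  move=> a1 a2 p q b' c' v' w' mp mq mv' mw' le'.
  have p1 := mon_pos mp; have p2 := mon_pos mq.
  have p3 := mon_pos mv'; have p4 := mon_pos mw'.
  have hK := KE0 p q v' w'.
  rewrite /KE in hK.
  rewrite (IH _ _ _ _ _ _ mq mv' mw') in hK; last by lia.
  rewrite (IH _ _ _ _ _ _ mp mv' mw') in hK; last by lia.
  rewrite (IH _ _ _ _ _ _ mw' mp mq) in hK; last by lia.
  rewrite (IH _ _ _ _ _ _ mv' mp mq) in hK; last by lia.
  rewrite !m0l !m0r !addr0 !subr0 in hK.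
  exact: six_cancel H6 hK.
case: mu le => [x Xu|a1 a2 p q mp mq] le; last exact: step mp mq mv mw le.
case: mv le => [y Xv|b1 b2 p q mp mq] le; last first.
  rewrite jac_cyc; apply: step mp mq mw (mon_gen Xu) _; lia.
case: mw le => [z Xw|c1 c2 p q mp mq] le; last first.
  rewrite jac_cyc jac_cyc; apply: step mp mq (mon_gen Xu) (mon_gen Xv) _; lia.
exact: HX.
Qed.

Inductive Sp : M -> Prop :=
| Sp0 : Sp 0
| SpS a n m u : mon n m -> Sp u -> Sp (a *: m + u).

Lemma Sp_lin a x y : Sp x -> Sp y -> Sp (a *: x + y).
Proof.
move=> hx hy; elim: hx => [|b n m u hm _ IH]; first by rewrite scaler0 add0r.
rewrite scalerDr scalerA -addrA; exact: SpS hm IH.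
Qed.

Lemma Sp_mon n m : mon n m -> Sp m.
Proof. by move=> hm; rewrite -[m]addr0 -[m]scale1r; apply: SpS hm Sp0. Qed.

Lemma Sp_mulmon n m y : mon n m -> Sp y -> Sp (mul m y).
Proof.
move=> hm; elim => [|b n' m' u hm' _ IH]; first by rewrite m0r; exact: Sp0.
rewrite mZDr; exact: SpS (mon_mul hm hm') IH.
Qed.

Lemma Sp_mul x y : Sp x -> Sp y -> Sp (mul x y).
Proof.
move=> hx hy; elim: hx => [|b n m u hm _ IH]; first by rewrite m0l; exact: Sp0.
rewrite mZDl; apply: Sp_lin IH; exact: Sp_mulmon hm hy.
Qed.

Lemma acg (p q r s t u : M) : p + q + (r + s) + (t + u) = p + r + t + (q + s + u).
Proof. by rewrite (addrACA p q r s) (addrACA (p + r) (q + s) t u). Qed.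

Lemma jacZDl a x y v w : jac (a *: x + y) v w = a *: jac x v w + jac y v w.
Proof.
rewrite /jac /jacobian mZDl mZDl mZDr mZDr mZDl !scalerDr.
exact: acg.
Qed.

Lemma jacA y : Sp y -> forall n1 n2 w x, mon n1 w -> mon n2 x -> jac y w x = 0.
Proof.
elim => [|a n m u hm _ IH] n1 n2 w x hw hx.
  by rewrite /jac /jacobian !(m0l, m0r) !addr0.
by rewrite jacZDl (IH _ _ _ _ hw hx) (mon_jac hm hw hx (leqnn _)) scaler0 add0r.
Qed.

Lemma jacB x y : Sp x -> Sp y -> forall n w, mon n w -> jac x y w = 0.
Proof.
move=> hx hy; elim: hx => [|a n m u hm _ IH] n1 w hw.
  by rewrite /jac /jacobian !(m0l, m0r) !addr0.
by rewrite jacZDl (IH _ _ hw) jac_cyc (jacA hy hw hm) scaler0 add0r.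
Qed.

Lemma jacC z x y : Sp z -> Sp x -> Sp y -> jac z x y = 0.
Proof.
move=> hz hx hy; elim: hz => [|a n m u hm _ IH].
  by rewrite /jac /jacobian !(m0l, m0r) !addr0.
by rewrite jacZDl IH jac_cyc (jacB hx hy hm) scaler0 add0r.
Qed.

End Main.

Unset Implicit Arguments.
Set Strict Implicit.

Theorem mainTheorem1 (F : fieldType) (M : lmodType F) (mul : M -> M -> M)
  (X : M -> Prop) :
  (2 \notin [pchar F])%N -> (3 \notin [pchar F])%N ->
  is_malcev_algebra mul ->
  generates mul X ->
  (forall x y z, X x -> X y -> X z -> jacobian mul x y z = 0) ->
  forall u v w : M, jacobian mul u v w = 0.
Proof.
move=> h2 h3 [Hb Ha Hm] Hg HX u v w.
have H6 := six_ne0 h2 h3.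
have Hs : forall m, Sp mul X m.
  apply: Hg; last by move=> x Xx; exact: Sp_mon (mon_gen mul Xx).
  split.
  - exact: Sp0.
  - move=> a x y; exact: Sp_lin.
  - move=> x y hx hy; exact: (@Sp_mul _ _ _ Hb _ _ _ hx hy).
exact: (jacC Hb Ha Hm HX H6 (Hs u) (Hs v) (Hs w)).
Qed.
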